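(* Let $d\ge1$, $n>0$ and $N=(d+1)n+d-1$. The number of maximal $d$-Brauer relations of an $N$-gon is $\frac{1}{n+1}\binom{(d+1)n+d-1}{n}$.
   Context: Let $\Pi$ be an $N$-gon with vertices numbered clockwise $1,\dots,N$ (mod $N$). A $d$-diagonal is a diagonal joining vertices $i$ and $i+d+j(d+1)$ for some $0\le j\le n-1$. A $d$-Brauer relation is a set of pairwise disjoint $d$-diagonals, and it is maximal if it is maximal with respect to inclusion. *)

(* Defs.v *)
From mathcomp Require Import all_boot.
Set Implicit Arguments. Unset Strict Implicit. Unset Printing Implicit Defensive.

(* Number of vertices N = (d+1)n + d - 1.  Vertices are 'I_N, i.e. labelled
   0,...,N-1 clockwise (a relabelling of 1,...,N), arithmetic mod N. *)
Definition Nsz (d n : nat) : nat := (d + 1) * n + d - 1.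

Notation vert d n := ('I_(Nsz d n)).

(* A (possibly boundary) chord is an unordered pair {x, y}, represented as a
   two-element set of vertices. *)
Definition is_ddiag (d n : nat) (D : {set vert d n}) : bool :=
  [exists x : vert d n, exists y : vert d n,
     [&& D == [set x; y], x != y &
         [exists j : 'I_n, val y == (val x + d + val j * (d + 1)) %% Nsz d n]]].

Definition chords_cross (d n : nat) (D1 D2 : {set vert d n}) : bool :=
  [exists a : vert d n, exists b : vert d n, exists c : vert d n,
     exists e : vert d n,
     [&& D1 == [set a; b], D2 == [set c; e] & (a < c < b) && (b < e)]].

Definition chords_disjoint (d n : nat) (D1 D2 : {set vert d n}) : bool :=
  [disjoint D1 & D2] && ~~ chords_cross D1 D2 && ~~ chords_cross D2 D1.

Definition brauer_rel (d n : nat) (R : {set {set vert d n}}) : Prop :=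
  (forall D, D \in R -> is_ddiag D) /\
  (forall D1 D2, D1 \in R -> D2 \in R -> D1 != D2 -> chords_disjoint D1 D2).

Definition max_brauer_rel (d n : nat) (R : {set {set vert d n}}) : Prop :=
  brauer_rel R /\ (forall S, brauer_rel S -> R \subset S -> S = R).

(* Main.v *)
Require Import Defs.
From mathcomp Require Import all_boot zify.
From Stdlib Require Import Classical ClassicalEpsilon.
Set Implicit Arguments. Unset Strict Implicit. Unset Printing Implicit Defensive.


Definition chordok (d L x y : nat) : bool := [&& x < y, y < L & (y - x) %% d.+1 == d].
Definition compat (a b c e : nat) : bool :=
  [&& a != c, a != e, b != c & b != e] && ~~ [&& a < c, c < b & b < e]
  && ~~ [&& c < a, a < e & e < b].
Definition valid d L (r : nat -> nat -> bool) :=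
  (forall x y, r x y -> chordok d L x y) /\
  (forall x y u v, r x y -> r u v -> (x != u) || (y != v) -> compat x y u v).
Definition noadd d L (r : nat -> nat -> bool) :=
  forall u v, chordok d L u v -> exists x y, r x y /\ ~~ compat x y u v.
Definition maximal d L r := valid d L r /\ noadd d L r.
Definition opener L (r : nat -> nat -> bool) a := has (r a) (iota 0 L).
Definition word L r := mkseq (opener L r) L.
Definition sig d x a := if a < x then a else a + d.+1.
Definition tau d x a := if a < x then a else a - d.+1.
Definition inblock d x a := (x <= a) && (a <= x + d).
Definition contract d x (r : nat -> nat -> bool) a b := r (sig d x a) (sig d x b).
Definition insert d x (r : nat -> nat -> bool) a b :=
  ((a == x) && (b == x + d)) ||
  [&& ~~ inblock d x a, ~~ inblock d x b & r (tau d x a) (tau d x b)].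
Definition insw d x (w : seq bool) := take x w ++ true :: nseq d false ++ drop x w.

Lemma chordok_mod d L x y : chordok d L x y ->
  [/\ x < y, y < L & exists q, y - x = q * d.+1 + d].
Proof.
case/and3P=> h1 h2 /eqP h3; split=> //; exists ((y - x) %/ d.+1).
by rewrite {1}(divn_eq (y - x) d.+1) h3.
Qed.

Lemma chordok_ge d L x y : chordok d L x y -> x + d <= y.
Proof. case/chordok_mod=> h1 h2 [q hq]. nia. Qed.

Lemma ltn_sig d x a b : (sig d x a < sig d x b) = (a < b).
Proof. rewrite /sig; case: ifP; case: ifP => *; lia. Qed.
Lemma eq_sig d x a b : (sig d x a == sig d x b) = (a == b).
Proof. rewrite /sig; case: ifP; case: ifP => *; lia. Qed.

Lemma compat_sig d x a b c e :
  compat (sig d x a) (sig d x b) (sig d x c) (sig d x e) = compat a b c e.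
Proof. by rewrite /compat !ltn_sig !eq_sig. Qed.

Lemma compat_sym a b c e : compat a b c e = compat c e a b.
Proof. rewrite /compat; apply/idP/idP; lia. Qed.

Lemma sig_tau d x a : ~~ inblock d x a -> sig d x (tau d x a) = a.
Proof.
rewrite /inblock /sig /tau => hb; case: (ltnP a x) => h /=; first by rewrite h.
rewrite ifN; lia.
Qed.
Lemma tau_sig d x a : tau d x (sig d x a) = a.
Proof.
rewrite /sig /tau; case: (ltnP a x) => h //=; first by rewrite h.
by rewrite ifN; [lia | lia].
Qed.
Lemma sig_nblock d x a : ~~ inblock d x (sig d x a).
Proof. rewrite /inblock /sig; case: ifP => *; lia. Qed.

Lemma chordok_sig d L x a b : x <= L ->
  chordok d (L + d.+1) (sig d x a) (sig d x b) = chordok d L a b.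
Proof.
move=> hx; rewrite /chordok /sig.
case: (ltnP a x) => ha; case: (ltnP b x) => hb.
- congr andb; congr andb; lia.
- have hab : a < b by lia.
  have -> : b + d.+1 - a = (b - a) + d.+1 by lia.
  rewrite modnDr ltn_add2r hab; have -> : a < b + d.+1 by lia. by [].
- apply/idP/idP; lia.
- have -> : b + d.+1 - (a + d.+1) = b - a by lia.
  by rewrite !ltn_add2r.
Qed.

Lemma compat_block d x u v : 0 < d -> ~~ inblock d x u -> ~~ inblock d x v -> u < v ->
  compat x (x + d) u v.
Proof. rewrite /inblock /compat => *. lia. Qed.

Lemma block d L r x a b : valid d L r -> r x (x + d) -> r a b ->
  ((a == x) && (b == x + d)) || (~~ inblock d x a && ~~ inblock d x b).
Proof.
move=> [hc hv] hx hab.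
case E: ((a == x) && (b == x + d)) => //=.
have hne : (a != x) || (b != x + d) by move: E; case: (a == x); case: (b == x + d).
have := hv _ _ _ _ hab hx hne.
have := chordok_ge (hc _ _ hab).
have := chordok_mod (hc _ _ hab).
rewrite /compat /inblock => -[h1 _ _] *. lia.
Qed.

Lemma contract_max d L x r : 0 < d -> maximal d (L + d.+1) r -> r x (x + d) ->
  maximal d L (contract d x r).
Proof.
move=> d0 [[hc hv] hn] hx.
have xL : x <= L by have := chordok_mod (hc _ _ hx); case=> _ h _; lia.
split; first split.
- by move=> a b h; rewrite -(chordok_sig _ _ _ xL); apply: hc.
- move=> a b u v h1 h2 hne; rewrite -(compat_sig d x); apply: hv => //.
  by rewrite !eq_sig.
- move=> u v huv.
  have := hn (sig d x u) (sig d x v); rewrite chordok_sig // => /(_ huv) [x' [y' [h1 h2]]].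
  case/orP: (block (conj hc hv) hx h1).
  + case/andP=> /eqP ? /eqP ?; subst x' y'.
    have : sig d x u < sig d x v by rewrite ltn_sig; case/and3P: huv.
    move/(compat_block d0 (sig_nblock d x u) (sig_nblock d x v)).
    by rewrite (negbTE h2).
  + case/andP=> b1 b2; exists (tau d x x'), (tau d x y'); split.
    * by rewrite /contract !sig_tau.
    * by rewrite -(compat_sig d x) !sig_tau.
Qed.

Lemma insert_max d L x r : 0 < d -> x <= L -> maximal d L r ->
  maximal d (L + d.+1) (insert d x r).
Proof.
move=> d0 xL [[hc hv] hn].
have hblk : chordok d (L + d.+1) x (x + d).
  rewrite /chordok; have -> : x + d - x = d by lia.
  rewrite modn_small //; apply/and3P; split=> //; lia.
have hch : forall a b, insert d x r a b -> ((a == x) && (b == x + d)) \/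
   [/\ ~~ inblock d x a, ~~ inblock d x b & r (tau d x a) (tau d x b)].
  by move=> a b; case/orP=> [->|/and3P[*]]; [left|right].
have hok : forall a b, insert d x r a b -> chordok d (L + d.+1) a b.
  move=> a b /hch [/andP[/eqP-> /eqP->] //|[b1 b2 h]].
  by rewrite -(sig_tau b1) -(sig_tau b2) chordok_sig //; apply: hc.
split; first split=> //.
- move=> a b u v h1 h2 hne.
  have hab := hok _ _ h1; have huv := hok _ _ h2.
  case: (hch _ _ h1) => [/andP[/eqP ea /eqP eb]|[a1 b1 r1]];
  case: (hch _ _ h2) => [/andP[/eqP eu /eqP ev]|[u1 v1 r2]].
  + by subst; rewrite !eqxx in hne.
  + subst; apply: compat_block => //; by case/and3P: huv.
  + subst; rewrite compat_sym; apply: compat_block => //; by case/and3P: hab.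
  + rewrite -(sig_tau a1) -(sig_tau b1) -(sig_tau u1) -(sig_tau v1) compat_sig.
    apply: hv => //; move: hne; apply: contraLR; rewrite negb_or !negbK.
    case/andP=> /eqP e1 /eqP e2.
    by rewrite -(sig_tau a1) -(sig_tau b1) -(sig_tau u1) -(sig_tau v1) e1 e2 !eqxx.
- move=> u v huv.
  case E: (~~ inblock d x u && ~~ inblock d x v).
  + case/andP: E => b1 b2.
    have := hn (tau d x u) (tau d x v).
    rewrite -(chordok_sig _ _ _ xL) !sig_tau // => /(_ huv) [x' [y' [h1 h2]]].
    exists (sig d x x'), (sig d x y'); split.
    * by rewrite /insert !sig_nblock !tau_sig h1 orbT.
    * by rewrite -(sig_tau b1) -(sig_tau b2) compat_sig.
  + exists x, (x + d); split; first by rewrite /insert !eqxx.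
    have := chordok_ge huv; case/and3P: huv => *.
    move: E; rewrite /compat /inblock => *. lia.
Qed.

Lemma insert_contract d L x r : valid d L r -> r x (x + d) ->
  forall a b, r a b = insert d x (contract d x r) a b.
Proof.
move=> hv hx a b; rewrite /insert /contract.
case h: (r a b).
- case/orP: (block hv hx h) => [->//|/andP[b1 b2]].
  by rewrite b1 b2 !sig_tau // h orbT.
- apply/esym/negbTE; rewrite negb_or; apply/andP; split.
  + by apply/negP=> /andP[/eqP ea /eqP eb]; subst; rewrite hx in h.
  + apply/negP=> /and3P[b1 b2]; by rewrite !sig_tau // h.
Qed.

Lemma openerP d L r a : valid d L r -> reflect (exists b, r a b) (opener L r a).
Proof.
move=> [hc _]; apply: (iffP hasP) => [[b _ h]|[b h]]; first by exists b.
exists b => //; rewrite mem_iota add0n; by case/and3P: (hc _ _ h).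
Qed.

Lemma opener_insert d L x r a : 0 < d -> x <= L -> maximal d L r ->
  opener (L + d.+1) (insert d x r) a =
  if a == x then true else if inblock d x a then false else opener L r (tau d x a).
Proof.
move=> d0 xL hm.
have hv' := (insert_max d0 xL hm).1.
have hv := hm.1.
case: eqP => [->|ax].
  by apply/(openerP _ hv'); exists (x + d); rewrite /insert !eqxx.
case: ifP => hb.
  apply/(openerP _ hv') => -[b]; rewrite /insert hb /=.
  by case/orP=> [/andP[/eqP]|].
apply/(openerP _ hv')/(openerP _ hv) => -[b].
- rewrite /insert hb /=; case/orP=> [/andP[/eqP //]|/andP[_ h]]; by exists (tau d x b).
- move=> h; exists (sig d x b); by rewrite /insert hb sig_nblock tau_sig h orbT.
Qed.

Lemma nth_insw d x (w : seq bool) i : x <= size w ->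
  nth false (insw d x w) i =
  if i < x then nth false w i else if i == x then true
  else if i <= x + d then false else nth false w (i - d.+1).
Proof.
move=> xs; rewrite /insw nth_cat size_take.
have -> : (if x < size w then x else size w) = x by case: ifP => //; lia.
case: ifP => h1; first by rewrite nth_take.
case: eqP => [->|hx]; first by rewrite subnn.
have -> : i - x = (i - x - 1).+1 by lia.
rewrite /= nth_cat size_nseq; case: ifP => h2.
  rewrite nth_nseq h2; case: ifP => //; lia.
rewrite ifN; last by lia.
rewrite nth_drop; congr nth; lia.
Qed.

Lemma word_insert d L x r : 0 < d -> x <= L -> maximal d L r ->
  word (L + d.+1) (insert d x r) = insw d x (word L r).
Proof.
move=> d0 xL hm.
have sz : size (insw d x (word L r)) = L + d.+1.
  rewrite /insw size_cat size_take /= size_cat size_nseq size_drop size_mkseq.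
  case: ifP => *; lia.
apply: (@eq_from_nth _ false); first by rewrite size_mkseq sz.
move=> i; rewrite size_mkseq => hi.
rewrite nth_mkseq // nth_insw ?size_mkseq // opener_insert //.
rewrite /inblock /tau.
case: (ltnP i x) => h1.
  by rewrite nth_mkseq ?(leq_trans h1 xL) //; have -> : (i == x) = false by lia;
     have -> : (x <= i) = false by lia.
case: eqP => // hix.
rewrite /=; case: ifP => h2 //.
rewrite nth_mkseq; [by [] | lia].
Qed.

Lemma last_true (P : nat -> bool) L : (exists2 a, a < L & P a) ->
  exists x, [/\ x < L, P x & forall a, x < a < L -> ~~ P a].
Proof.
elim: L => [[a //]|L IH [a aL Pa]].
case PL: (P L).
  exists L; split=> // b; lia.
have [|x [x1 x2 x3]] := IH.
  exists a => //; move: aL; rewrite ltnS leq_eqVlt => /orP[/eqP E|//].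
  by subst; rewrite PL in Pa.
exists x; split=> //; first lia.
move=> b hb; case: (ltnP b L) => hbL; first by apply: x3; lia.
have -> : b = L by lia. by rewrite PL.
Qed.

Lemma last_opener_chord d L r x : 0 < d -> maximal d L r -> opener L r x ->
  (forall a, x < a < L -> ~~ opener L r a) -> r x (x + d).
Proof.
move=> d0 [[hc hv] hn] /(openerP _ (conj hc hv)) [y hxy] hlast.
have [h1 h2 [q hq]] := chordok_mod (hc _ _ hxy).
case: q hq => [|q] hq; first by have -> : x + d = y by lia.
have hy : x + 2 * d + 1 <= y by nia.
have hok : chordok d L x.+1 (x.+1 + d).
  rewrite /chordok; have -> : x.+1 + d - x.+1 = d by lia.
  rewrite modn_small //; apply/and3P; split=> //; lia.
have [a [b [hab hnc]]] := hn _ _ hok.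
have [a1 a2 _] := chordok_mod (hc _ _ hab).
have ax : a <= x.
  case: (leqP a x) => // ha.
  have : opener L r a by apply/(openerP _ (conj hc hv)); exists b.
  by move/negP: (hlast a (introT andP (conj ha (ltn_trans a1 a2)))).
case: (ltnP a x) => ha.
  have hc1 : compat a b x y by apply: hv => //; rewrite (_ : (a != x) = true) //; lia.
  move: hc1 hnc; rewrite /compat => *. lia.
have ea : a = x by lia.
subst a.
case: (eqVneq b y) => [eb|nb].
  subst b; move: hnc; rewrite /compat => *. lia.
have := hv _ _ _ _ hab hxy; rewrite nb orbT => /(_ isT).
by rewrite /compat eqxx.
Qed.

Lemma maximal_opener d L r : 0 < d -> d < L -> maximal d L r ->
  exists2 a, a < L & opener L r a.
Proof.
move=> d0 dL [hv hn].
have hok : chordok d L 0 d.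
  rewrite /chordok subn0 modn_small //; apply/and3P; split=> //.
have [a [b [hab _]]] := hn _ _ hok.
exists a; first by have [? ? _] := chordok_mod (hv.1 _ _ hab); lia.
by apply/(openerP _ hv); exists b.
Qed.

Lemma small_empty d L r a b : L <= d -> valid d L r -> r a b = false.
Proof.
move=> hL [hc _]; apply/negP => h.
have := chordok_ge (hc _ _ h); have [_ h2 _] := chordok_mod (hc _ _ h). lia.
Qed.

Lemma eq_word L (r1 r2 : nat -> nat -> bool) :
  (forall a b, r1 a b = r2 a b) -> word L r1 = word L r2.
Proof.
move=> e; apply: eq_mkseq => a; rewrite /opener; apply: eq_has => b; exact: e.
Qed.

Lemma word_empty L (r : nat -> nat -> bool) : (forall a b, r a b = false) ->
  word L r = nseq L false.
Proof.
move=> e; apply: (@eq_from_nth _ false); first by rewrite size_mkseq size_nseq.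
move=> i; rewrite size_mkseq => hi; rewrite nth_mkseq // nth_nseq hi.
by apply/hasP => -[b _]; rewrite e.
Qed.

Lemma opener_nth L r a : a < L -> opener L r a = nth false (word L r) a.
Proof. by move=> h; rewrite nth_mkseq. Qed.

Fixpoint run d k (w : seq bool) : option nat :=
  match w with
  | [::] => Some k
  | b :: w' => if b then run d (k + d) w' else
               if k is k'.+1 then run d k' w' else None
  end.

Lemma run_cat d k u v : run d k (u ++ v) = obind (fun k' => run d k' v) (run d k u).
Proof. elim: u k => [//|[|] u IH] [|k] //=. Qed.

Lemma run_nseq d k j : run d k (nseq j false) = if j <= k then Some (k - j) else None.
Proof.
elim: j k => [|j IH] [|k] //=; by rewrite ?subn0 ?IH ?subSS.
Qed.

Lemma run_insw d k x w : x <= size w -> run d k (insw d x w) = run d k w.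
Proof.
move=> xs; rewrite /insw run_cat -{3}(cat_take_drop x w) run_cat.
case: (run d k (take x w)) => //= k'.
by rewrite run_cat run_nseq leq_addl addnK.
Qed.

Lemma run_size d k k' w : run d k w = Some k' ->
  size w + k' = k + d.+1 * count_mem true w.
Proof.
elim: w k => [|[|] w IH] k /=; first by case=> ->; lia.
- move/IH => h; rewrite mulnDr muln1; move: h; set c := count_mem true w; set s := size w; move=> h; lia.
- case: k => [//|k] /IH h; rewrite add0n; move: h; set c := count_mem true w; set s := size w; move=> h; lia.
Qed.

Lemma last_true_dec (w : seq bool) : true \in w ->
  exists pre j, w = pre ++ true :: nseq j false.
Proof.
elim: w => [//|b w IH].
case T: (true \in w).
  have [pre [j ->]] := IH T; by exists (b :: pre), j.
rewrite inE => /orP[/eqP <-|]; last by rewrite T.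
exists [::], (size w) => /=; congr cons.
clear IH; elim: w T => [//|c w' IH'] /= /negbT; rewrite inE negb_or => /andP[hc hw].
by rewrite -IH' ?(negbTE hw) //; case: c hc.
Qed.

Lemma run_dec d k w : run d k w = Some 0 -> true \in w ->
  exists x w', [/\ x <= size w', w = insw d x w' & run d k w' = Some 0].
Proof.
move=> hr /last_true_dec [pre [j E]]; subst w.
move: hr; rewrite run_cat; case E1: (run d k pre) => [k1|//] /=.
rewrite run_nseq; case: ifP => // hj [] hj2.
have ej : j = d + k1 by lia.
exists (size pre), (pre ++ nseq k1 false); split.
- by rewrite size_cat; lia.
- rewrite /insw take_size_cat // drop_size_cat // ej nseqD. by [].
- by rewrite run_cat E1 /= run_nseq leqnn subnn.
Qed.

Lemma insw_inj d x u v : x <= size u -> x <= size v -> insw d x u = insw d x v -> u = v.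
Proof.
move=> hu hv E.
have sz : forall w, x <= size w -> size (take x w) = x.
  move=> w hw; rewrite size_take; case: ifP => //; lia.
have := congr1 (take x) E; rewrite /insw !take_size_cat ?sz // => Et.
have := congr1 (drop (x + d.+1)) E; rewrite /insw !drop_cat !sz //.
rewrite ifN; last by lia.
have -> : x + d.+1 - x = (size (true :: nseq d false)) by rewrite /= size_nseq; lia.
rewrite -!cat_cons !drop_size_cat // => Ed.
by rewrite ifN in Ed; [rewrite -(cat_take_drop x u) -(cat_take_drop x v) Et Ed | lia].
Qed.

Lemma size_insw d x w : x <= size w -> size (insw d x w) = size w + d.+1.
Proof.
move=> h; rewrite /insw size_cat size_take /= size_cat size_nseq size_drop.
case: ifP => *; lia.
Qed.

Lemma count0_nseq (w : seq bool) : count_mem true w = 0 -> w = nseq (size w) false.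
Proof. elim: w => [//|[|] w IH] //=; rewrite ?add0n => h; by rewrite -IH. Qed.

Lemma M1 d n : 0 < d -> forall L r, L = d.+1 * n + (d - 1) -> maximal d L r ->
  run d (d - 1) (word L r) = Some 0.
Proof.
move=> d0; elim: n => [|n IH] L r EL hm.
  rewrite (@word_empty L r) ?EL; last by move=> a b; apply: small_empty hm.1; lia.
  by rewrite muln0 add0n run_nseq leqnn subnn.
have [a aL oa] := maximal_opener d0 (ltac:(lia) : d < L) hm.
have [x [xL ox xlast]] := last_true (ex_intro2 _ _ a aL oa).
have hx := last_opener_chord d0 hm ox xlast.
set L' := d.+1 * n + (d - 1).
have EL' : L = L' + d.+1 by rewrite EL /L'; lia.
rewrite EL' in hm.
have hm' := contract_max d0 hm hx.
have xL' : x <= L' by have := chordok_ge (hm.1.1 _ _ hx); have [_ ? _] := chordok_mod (hm.1.1 _ _ hx); lia.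
rewrite EL' (eq_word _ (insert_contract hm.1 hx)) word_insert // run_insw ?size_mkseq //.
exact: IH.
Qed.

Lemma M2 d n : 0 < d -> forall L r1 r2, L = d.+1 * n + (d - 1) ->
  maximal d L r1 -> maximal d L r2 -> word L r1 = word L r2 ->
  forall a b, r1 a b = r2 a b.
Proof.
move=> d0; elim: n => [|n IH] L r1 r2 EL hm1 hm2 hw a b.
  by rewrite (@small_empty d L r1 a b _ hm1.1) ?(@small_empty d L r2 a b _ hm2.1) //; lia.
have [a0 aL oa] := maximal_opener d0 (ltac:(lia) : d < L) hm1.
have [x [xL ox xlast]] := last_true (ex_intro2 _ _ a0 aL oa).
have ox2 : opener L r2 x by rewrite opener_nth // -hw -opener_nth.
have xlast2 : forall a, x < a < L -> ~~ opener L r2 a.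
  move=> c hc; rewrite opener_nth ?(proj2 (andP hc)) // -hw -opener_nth;
  [exact: xlast | by case/andP: hc].
have hx1 := last_opener_chord d0 hm1 ox xlast.
have hx2 := last_opener_chord d0 hm2 ox2 xlast2.
set L' := d.+1 * n + (d - 1).
have EL' : L = L' + d.+1 by rewrite EL /L'; lia.
rewrite EL' in hm1 hm2 hw.
have hm1' := contract_max d0 hm1 hx1.
have hm2' := contract_max d0 hm2 hx2.
have xL' : x <= L' by have := chordok_ge (hm1.1.1 _ _ hx1); have [_ ? _] := chordok_mod (hm1.1.1 _ _ hx1); lia.
move: hw; rewrite (eq_word _ (insert_contract hm1.1 hx1)) (eq_word _ (insert_contract hm2.1 hx2)).
rewrite !word_insert // => /insw_inj; rewrite !size_mkseq => /(_ xL' xL') hw'.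
have e := IH L' _ _ erefl hm1' hm2' hw'.
rewrite (insert_contract hm1.1 hx1) (insert_contract hm2.1 hx2) /insert.
by rewrite e.
Qed.

Lemma M3 d n : 0 < d -> forall L w, L = d.+1 * n + (d - 1) -> size w = L ->
  run d (d - 1) w = Some 0 -> exists r, maximal d L r /\ word L r = w.
Proof.
move=> d0; elim: n => [|n IH] L w EL sw hr.
  have c0 : count_mem true w = 0 by have := run_size hr; lia.
  exists (fun _ _ => false); split.
    split; first by split.
    move=> u v huv; have := chordok_ge huv; have [_ ? _] := chordok_mod huv; lia.
  by rewrite word_empty // (count0_nseq c0) sw.
have cpos : 0 < count_mem true w by have := run_size hr; lia.
have tin : true \in w by rewrite -has_pred1 has_count.
have [x [w' [xw' Ew hr']]] := run_dec hr tin.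
set L' := d.+1 * n + (d - 1).
have sw' : size w' = L' by move: sw; rewrite Ew size_insw // EL /L'; lia.
have [r' [hm' hw']] := IH L' w' erefl sw' hr'.
exists (insert d x r'); have EL' : L = L' + d.+1 by rewrite EL /L'; lia.
rewrite EL'; split; first by apply: insert_max => //; lia.
rewrite word_insert ?hw' ?Ew //; by rewrite -sw'.
Qed.

Fixpoint allw n : seq (seq bool) :=
  if n is n'.+1 then [seq false :: w | w <- allw n'] ++ [seq true :: w | w <- allw n']
  else [:: [::]].

Lemma mem_allw n w : (w \in allw n) = (size w == n).
Proof.
elim: n w => [|n IH] w; first by case: w.
rewrite /= mem_cat.
have ic : forall b : bool, injective (cons b) by move=> b u v; case.
case: w => [|b w].
  by apply/norP; split; apply/negP => /mapP [? _ ?].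
have nf : forall c (s : seq (seq bool)), (b :: w \in map (cons c) s) = (b == c) && (w \in s).
  move=> c s; case: (eqVneq b c) => [->|ne]; first by rewrite mem_map.
  by apply/negbTE/negP => /mapP [u _ [e _]]; rewrite e eqxx in ne.
by rewrite !nf IH eqSS /=; case: (b) => /=; rewrite ?andbF ?andbT ?orbF. 
Qed.

Lemma uniq_allw n : uniq (allw n).
Proof.
elim: n => [//|n IH] /=; rewrite cat_uniq !map_inj_uniq //; try by move=> ? ?; case.
rewrite IH /= andbT; apply/hasP => -[w /mapP [u _ ->]] /mapP [v _] //.
Qed.

Definition cnt d k L := size (filter (fun w => run d k w == Some 0) (allw L)).

Lemma cntS d k L : cnt d k L.+1 =
  (if k is k'.+1 then cnt d k' L else 0) + cnt d (k + d) L.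
Proof.
rewrite /cnt /= filter_cat size_cat !filter_map !size_map; congr addn.
case: k => [|k] //=.
by rewrite (@eq_filter _ _ pred0) // filter_pred0.
Qed.

Lemma cnt0 d k : cnt d k k = 1.
Proof.
rewrite /cnt (@perm_size _ _ [:: nseq k false]) //.
apply: (uniq_perm (filter_uniq _ (uniq_allw k))) => // w.
rewrite mem_filter mem_allw inE.
apply/andP/eqP => [[/eqP h /eqP hs]|->]; last first.
  by rewrite run_nseq leqnn subnn size_nseq.
have := run_size h; rewrite hs => e.
have c0 : count_mem true w = 0 by move: e; set c := count_mem true w; nia.
by rewrite (count0_nseq c0) hs.
Qed.

Lemma cnt_formula d n : 0 < d -> forall k,
  cnt d k (d.+1 * n.+1 + k) + d * 'C(d.+1 * n.+1 + k, n) = 'C(d.+1 * n.+1 + k, n.+1).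
Proof.
move=> d0; elim: n => [|n IHn] k.
- elim: k => [|k IHk].
  + have -> : d.+1 * 1 + 0 = d.+1 by lia.
    by rewrite cntS add0n add0n cnt0 bin0 bin1; lia.
  + have -> : d.+1 * 1 + k.+1 = (d.+1 * 1 + k).+1 by lia.
    rewrite cntS (_ : d.+1 * 1 + k = k.+1 + d) ?cnt0; last by lia.
    rewrite bin0 bin1; move: IHk; rewrite bin0 bin1 (_ : d.+1 * 1 + k = k.+1 + d); last by lia.
    lia.
- elim: k => [|k IHk].
  + set K := d.+1 * n.+1 + d.
    have -> : d.+1 * n.+2 + 0 = K.+1 by rewrite /K; lia.
    rewrite cntS add0n binS binS.
    have h1 := IHn d; rewrite -/K in h1.
    have h2 : 'C(K, n.+2) = d * 'C(K, n.+1).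
      have := mul_bin_left K n.+1.
      have -> : K - n.+1 = d * n.+2 by rewrite /K; nia.
      move=> e; apply/eqP; rewrite -(@eqn_pmul2l n.+2) // e; apply/eqP; nia.
    move: h1 h2; set A := 'C(K, n); set B := 'C(K, n.+1); set C := 'C(K, n.+2).
    set c := cnt d d K; nia.
  + set K := d.+1 * n.+2 + k.
    have -> : d.+1 * n.+2 + k.+1 = K.+1 by rewrite /K; lia.
    rewrite cntS binS binS.
    have h1 := IHn (k.+1 + d).
    rewrite (_ : d.+1 * n.+1 + (k.+1 + d) = K) in h1; last by rewrite /K; lia.
    move: IHk h1; rewrite -/K.
    set A := 'C(K, n); set B := 'C(K, n.+1); set C := 'C(K, n.+2).
    set c1 := cnt d k K; set c2 := cnt d (k.+1 + d) K; nia.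
Qed.

Lemma cnt_final d n : 0 < d -> 0 < n ->
  (n + 1) * cnt d (d - 1) (d.+1 * n + (d - 1)) = 'C(d.+1 * n + (d - 1), n).
Proof.
move=> d0; case: n => [//|n] _.
have h := cnt_formula n d0 (d - 1).
set N := d.+1 * n.+1 + (d - 1) in h *.
have h2 := mul_bin_left N n.
rewrite (_ : N - n = d * n.+2) in h2; last by rewrite /N; nia.
move: h h2; set A := 'C(N, n); set B := 'C(N, n.+1); set c := cnt d (d - 1) N.
nia.
Qed.

Lemma set2_inj (T : finType) (i j k l : T) (f : T -> nat) :
  f i < f j -> f k < f l -> [set i; j] = [set k; l] -> i = k /\ j = l.
Proof.
move=> hij hkl E.
have hi : i \in [set k; l] by rewrite -E set21.
have hj : j \in [set k; l] by rewrite -E set22.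
move: hi hj; rewrite !inE => /orP[/eqP ei|/eqP ei] /orP[/eqP ej|/eqP ej]; subst.
- by move: hij; rewrite ltnn.
- by [].
- move: hij hkl; lia.
- by move: hij; rewrite ltnn.
Qed.

Lemma ord_set2_inj N (i j k l : 'I_N) :
  i < j -> k < l -> [set i; j] = [set k; l] -> i = k /\ j = l.
Proof. exact: (@set2_inj _ i j k l val). Qed.

Lemma ddiagP d n (D : {set 'I_(Nsz d n)}) : 0 < d -> 0 < n ->
  is_ddiag D <-> exists i j : 'I_(Nsz d n), [/\ i < j, D = [set i; j] & chordok d (Nsz d n) i j].
Proof.
move=> d0 n0.
have hN : Nsz d n = d.+1 * n + (d - 1) by rewrite /Nsz; lia.
split.
- case/existsP=> x /existsP [y /and3P [/eqP -> xy /existsP [j /eqP hy]]].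
  set t := d + j * (d + 1).
  have tN : t < (Nsz d n).
    rewrite /t hN; have := ltn_ord j; set jj := nat_of_ord j => hj.
    have : jj * (d + 1) <= (n - 1) * (d + 1) by apply: leq_mul; lia.
    nia.
  have xN := ltn_ord x; have yN := ltn_ord y.
  move: hy; rewrite -addnA -/t.
  have t0 : d <= t by rewrite /t; lia.
  have tdef : t = j * d.+1 + d by rewrite /t; lia.
  clearbody t.
  case: (ltnP (x + t) (Nsz d n)) => hxt.
  + rewrite modn_small // => hy.
    move: hy => hy0; have hy : (y : nat) = x + t := hy0; clear hy0.
    exists x, y; split; [lia | by [] |].
    rewrite /chordok hy; apply/and3P; split; [lia|lia|].
    by rewrite (_ : x + t - x = j * d.+1 + d); [rewrite modnMDl modn_small | lia].
  + have -> : x + t = (x + t - (Nsz d n)) + (Nsz d n) by lia.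
    rewrite modnDr modn_small; last by lia.
    move=> hy0; have hy : (y : nat) = x + t - (Nsz d n) := hy0; clear hy0.
    exists y, x; split; [lia | by rewrite setUC |].
    rewrite /chordok; apply/and3P; split; [lia|lia|].
    have hj := ltn_ord j.
    rewrite (_ : x - y = (n - j - 1) * d.+1 + d); first by rewrite modnMDl modn_small.
    rewrite hy tdef.
    have : j + 1 <= n by lia.
    move=> hjn. nia.
- move=> [i [j [ij -> hc]]].
  have [_ jN [q hq]] := chordok_mod hc.
  have qn : q < n by nia.
  apply/existsP; exists i; apply/existsP; exists j.
  rewrite eqxx /=; apply/andP; split; first by rewrite neq_ltn ij.
  apply/existsP; exists (Ordinal qn) => /=.
  rewrite modn_small; last by lia.
  apply/eqP; rewrite addn1; lia.
Qed.

Lemma disjoint2 (T : finType) (i j k l : T) :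
  [disjoint [set i; j] & [set k; l]] = [&& i != k, i != l, j != k & j != l].
Proof.
rewrite disjoints_subset subUset !sub1set !inE !negb_or.
by case: (i == k); case: (i == l); case: (j == k); case: (j == l).
Qed.

Lemma cross2 d n (i j k l : 'I_(Nsz d n)) : i < j -> k < l ->
  chords_cross [set i; j] [set k; l] = [&& i < k, k < j & j < l].
Proof.
move=> ij kl; apply/idP/idP.
- case/existsP=> a /existsP[b /existsP[c /existsP[e /and3P[/eqP E1 /eqP E2 /andP[/andP[h1 h2] h3]]]]].
  have [e1 e2] := ord_set2_inj ij (ltn_trans h1 h2) E1.
  have [e3 e4] := ord_set2_inj kl (ltn_trans h2 h3) E2.
  by subst; rewrite h1 h2 h3.
- case/and3P=> h1 h2 h3; apply/existsP; exists i; apply/existsP; exists j;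
  apply/existsP; exists k; apply/existsP; exists l.
  by rewrite !eqxx h1 h2 h3.
Qed.

Lemma disj_compat d n (i j k l : 'I_(Nsz d n)) : i < j -> k < l ->
  chords_disjoint [set i; j] [set k; l] = compat i j k l.
Proof.
move=> ij kl; rewrite /chords_disjoint disjoint2 !cross2 //.
Qed.

Definition rR d n (R : {set {set 'I_(Nsz d n)}}) (a b : nat) : bool :=
  [exists i : 'I_(Nsz d n), exists j : 'I_(Nsz d n),
     [&& (i : nat) == a, (j : nat) == b, i < j & [set i; j] \in R]].

Lemma rRP d n (R : {set {set 'I_(Nsz d n)}}) a b :
  reflect (exists i j : 'I_(Nsz d n), [/\ (i : nat) = a, (j : nat) = b, i < j & [set i; j] \in R])
    (rR R a b).
Proof.
apply: (iffP existsP).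
- by move=> [i /existsP [j /and4P [/eqP h1 /eqP h2 h3 h4]]]; exists i, j.
- by move=> [i [j [<- <- h3 h4]]]; exists i; apply/existsP; exists j; rewrite !eqxx h3 h4.
Qed.

Lemma rR_valid d n R : 0 < d -> 0 < n -> brauer_rel R -> valid d (Nsz d n) (@rR d n R).
Proof.
move=> d0 n0 [hd hp]; split.
- move=> a b /rRP [i [j [<- <- ij iR]]].
  have [i' [j' [ij' E hc]]] := (ddiagP _ d0 n0).1 (hd _ iR).
  by have [-> ->] := ord_set2_inj ij ij' E.
- move=> x y u v /rRP [i [j [ex ey ij iR]]] /rRP [k [l [eu ev kl kR]]] hne.
  subst; rewrite -disj_compat //; apply: hp => //.
  apply/negP => /eqP E; have [ei ej] := ord_set2_inj ij kl E.
  by move: hne; rewrite ei ej !eqxx.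
Qed.

Lemma rR_noadd d n R : 0 < d -> 0 < n -> brauer_rel R ->
  ((forall S, brauer_rel S -> R \subset S -> S = R) <-> noadd d (Nsz d n) (@rR d n R)).
Proof.
move=> d0 n0 hR; split.
- move=> hmax u v hc.
  apply: NNPP => H.
  have hall : forall x y, rR R x y -> compat x y u v.
    move=> x y h; case E: (compat x y u v) => //; exfalso; apply: H.
    by exists x, y; rewrite E.
  have [uv vN _] := chordok_mod hc.
  pose iu := Ordinal (ltn_trans uv vN); pose iv := Ordinal vN.
  have iuv : iu < iv by [].
  pose S := [set iu; iv] |: R.
  have hS : brauer_rel S.
    have gen : forall D1, D1 \in R -> chords_disjoint D1 [set iu; iv] /\ chords_disjoint [set iu; iv] D1.
      move=> D1 h1.
      have [k [l [kl E hc']]] := (ddiagP _ d0 n0).1 (hR.1 _ h1); subst D1.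
      have hkl : rR R k l by apply/rRP; exists k, l.
      have := hall _ _ hkl => hcp.
      rewrite !disj_compat //; split=> //; by rewrite compat_sym.
    split.
    + move=> D; rewrite !inE => /orP[/eqP ->|]; last by apply: hR.1.
      by apply/(ddiagP _ d0 n0); exists iu, iv.
    + move=> D1 D2; rewrite !inE => /orP[/eqP ->|h1] /orP[/eqP ->|h2] hne.
      * by rewrite eqxx in hne.
      * exact: (gen _ h2).2.
      * exact: (gen _ h1).1.
      * exact: hR.2.
  have := hmax S hS (subsetUr _ _) => e.
  have : [set iu; iv] \in R by rewrite -e !inE eqxx.
  move=> hin; have hr : rR R u v by apply/rRP; exists iu, iv.
  by move: (hall _ _ hr); rewrite /compat eqxx.
- move=> hna S hS hRS; apply/eqP; rewrite eqEsubset hRS andbT.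
  apply/subsetP => D hDS; apply: NNPP => hDR.
  have [i [j [ij ED hc]]] := (ddiagP _ d0 n0).1 (hS.1 _ hDS); subst D.
  have [x [y [hxy hnc]]] := hna _ _ hc.
  case/rRP: hxy => k [l [ek el kl kR]]; subst.
  have hne : [set k; l] != [set i; j].
    by apply/negP => /eqP E; apply: hDR; rewrite -E.
  have := hS.2 _ _ (subsetP hRS _ kR) hDS hne.
  by rewrite disj_compat // (negbTE hnc).
Qed.

Lemma rR_sub d n (R1 R2 : {set {set 'I_(Nsz d n)}}) : 0 < d -> 0 < n -> brauer_rel R1 ->
  (forall a b, rR R1 a b -> rR R2 a b) -> R1 \subset R2.
Proof.
move=> d0 n0 h1 e; apply/subsetP => D hD.
have [i [j [ij ED _]]] := (ddiagP _ d0 n0).1 (h1.1 _ hD); subst D.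
have : rR R1 i j by apply/rRP; exists i, j.
move/e/rRP => [i' [j' [ei ej _ h]]].
have ei2 : i = i' by apply/val_inj. have ej2 : j = j' by apply/val_inj. by rewrite ei2 ej2.
Qed.

Lemma rR_inj d n (R1 R2 : {set {set 'I_(Nsz d n)}}) : 0 < d -> 0 < n ->
  brauer_rel R1 -> brauer_rel R2 -> (forall a b, rR R1 a b = rR R2 a b) -> R1 = R2.
Proof.
move=> d0 n0 h1 h2 e; apply/eqP; rewrite eqEsubset.
rewrite (rR_sub d0 n0 h1) ?(rR_sub d0 n0 h2) // => a b; by rewrite e.
Qed.

Lemma realize d n (r : nat -> nat -> bool) : 0 < d -> 0 < n -> valid d (Nsz d n) r ->
  exists R : {set {set 'I_(Nsz d n)}}, brauer_rel R /\ forall a b, rR R a b = r a b.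
Proof.
move=> d0 n0 [hc hv].
pose R := [set D : {set 'I_(Nsz d n)} | [exists i : 'I_(Nsz d n), exists j : 'I_(Nsz d n), [&& i < j, r i j & D == [set i; j]]]].
have memR : forall D, reflect (exists i j : 'I_(Nsz d n), [/\ i < j, r i j & D = [set i; j]]) (D \in R).
  move=> D; rewrite inE; apply: (iffP existsP).
  - by move=> [i /existsP [j /and3P [h1 h2 /eqP h3]]]; exists i, j.
  - by move=> [i [j [h1 h2 h3]]]; exists i; apply/existsP; exists j; rewrite h1 h2 h3 eqxx.
exists R; split; first split.
- move=> D /memR [i [j [ij hr ->]]]; apply/(ddiagP _ d0 n0); exists i, j; split=> //.
  exact: hc.
- move=> D1 D2 /memR [i [j [ij hr ->]]] /memR [k [l [kl hr' ->]]] hne.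
  rewrite disj_compat //; apply: hv => //.
  rewrite -negb_and; apply/negP => /andP [/eqP e1 /eqP e2].
  have ei : i = k by apply/val_inj.
  have ej : j = l by apply/val_inj.
  by move: hne; rewrite ei ej eqxx.
- move=> a b; apply/idP/idP.
  + case/rRP => i [j [<- <- ij /memR [i' [j' [ij' hr E]]]]].
    by have [-> ->] := ord_set2_inj ij ij' E.
  + move=> h; have [ab bN _] := chordok_mod (hc _ _ h).
    apply/rRP; exists (Ordinal (ltn_trans ab bN)), (Ordinal bN); split=> //.
    by apply/memR; exists (Ordinal (ltn_trans ab bN)), (Ordinal bN).
Qed.

Definition pb (P : Prop) : bool := if excluded_middle_informative P then true else false.
Lemma pbP (P : Prop) : reflect P (pb P).
Proof. rewrite /pb; case: excluded_middle_informative => h; by constructor. Qed.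

Lemma maximal_ext d L (r1 r2 : nat -> nat -> bool) : (forall a b, r1 a b = r2 a b) ->
  maximal d L r1 -> maximal d L r2.
Proof.
move=> e [[hc hv] hn]; split; first split.
- by move=> x y; rewrite -e; apply: hc.
- by move=> x y u v; rewrite -!e; apply: hv.
- move=> u v h; have [x [y [h1 h2]]] := hn u v h; exists x, y; by rewrite -e.
Qed.

Lemma max_iff d n R : 0 < d -> 0 < n -> brauer_rel R ->
  max_brauer_rel R <-> maximal d (Nsz d n) (@rR d n R).
Proof.
move=> d0 n0 hR; split.
- move=> [_ hm]; split; first exact: rR_valid.
  by apply/(rR_noadd d0 n0 hR).
- move=> [_ hn]; split=> //; by apply/(rR_noadd d0 n0 hR).
Qed.

Theorem theorem8p19 (d n : nat) (hd : 1 <= d) (hn : 0 < n) :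
  exists L : seq {set {set vert d n}},
    uniq L /\ (forall R, R \in L <-> max_brauer_rel R) /\
    (n + 1) * size L = 'C((d + 1) * n + d - 1, n).
Proof.
set N := Nsz d n.
have hN : Nsz d n = d.+1 * n + (d - 1) by rewrite /Nsz; lia.
pose L := enum [pred R : {set {set vert d n}} | pb (max_brauer_rel R)].
have memL : forall R, R \in L <-> max_brauer_rel R.
  by move=> R; rewrite /L mem_enum inE; split => [/pbP|/pbP].
exists L; split; first exact: enum_uniq.
split; first exact: memL.
pose phi (R : {set {set vert d n}}) := word (Nsz d n) (@rR d n R).
pose BW := filter (fun w => run d (d - 1) w == Some 0) (allw (Nsz d n)).
have hperm : perm_eq (map phi L) BW.
  apply: uniq_perm.
  - rewrite map_inj_in_uniq ?enum_uniq // => R1 R2 /memL h1 /memL h2 e.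
    have m1 := (max_iff hd hn h1.1).1 h1.
    have m2 := (max_iff hd hn h2.1).1 h2.
    apply: (rR_inj hd hn h1.1 h2.1).
    exact: (M2 hd hN m1 m2 e).
  - exact: (filter_uniq _ (uniq_allw _)).
  - move=> w; apply/idP/idP.
    + case/mapP => R /memL hR ->.
      have m := (max_iff hd hn hR.1).1 hR.
      rewrite mem_filter mem_allw size_mkseq eqxx andbT.
      by rewrite (M1 hd hN m).
    + rewrite mem_filter mem_allw => /andP [/eqP hr /eqP sw].
      have [r [hm hw]] := M3 hd hN sw hr.
      have [R [hR e]] := realize hd hn hm.1.
      have hm' : maximal d (Nsz d n) (@rR d n R).
        by apply: (maximal_ext _ hm) => a b; rewrite e.
      apply/mapP; exists R; first by apply/memL; apply/(max_iff hd hn hR).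
      by rewrite /phi -hw; apply: eq_word.
rewrite -(size_map phi) (perm_size hperm).
have := cnt_final hd hn; rewrite -hN /cnt => <-.
by rewrite /Nsz addn1.
Qed.
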